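(* For any sequence of instances $\{\mathcal{I}_N\}_{N\ge1}$ of the binary voting game there exists a sequence of regular strategy profiles $\{\Sigma'_N\}_{N\ge1}$ ($\Sigma'_N$ a profile in $\mathcal{I}_N$) such that $\lim_{N\to\infty}A(\Sigma'_N)=1$.
   Context: Binary voting game. An instance has $N$ agents each voting for $\mathbf{A}$ or $\mathbf{R}$. Unobserved world state $W\in\{L,H\}$ with common prior $P_L,P_H>0$. Conditional on $W$, each agent independently receives a signal $S_n\in\{l,h\}$ with $P_{sw}=\Pr[S_n=s\mid W=w]$, $P_{hH}>P_{hL}$, $P_{lH}<P_{lL}$. With threshold $\mu\in(0,1)$, $\mathbf{A}$ wins iff at least $\mu N$ agents vote $\mathbf{A}$, else $\mathbf{R}$ wins. Agent $n$ has utility $v_n:\{L,H\}\times\{\mathbf{A},\mathbf{R}\}\to\{0,\dots,B\}$ with $v_n(H,\mathbf{A})>v_n(L,\mathbf{A})$, $v_n(H,\mathbf{R})<v_n(L,\mathbf{R})$. Every agent is friendly ($v_n(H,\mathbf{A})>v_n(L,\mathbf{A})>v_n(L,\mathbf{R})>v_n(H,\mathbf{R})$), unfriendly ($v_n(L,\mathbf{R})>v_n(H,\mathbf{R})>v_n(H,\mathbf{A})>v_n(L,\mathbf{A})$), or contingent ($v_n(H,\mathbf{A})>v_n(H,\mathbf{R})$, $v_n(L,\mathbf{R})>v_n(L,\mathbf{A})$). Fixed constants $\alpha_F,\alpha_U,\alpha_C\ge0$ summing to $1$: $N_F=\lfloor\alpha_F N\rfloor$ friendly, $N_U=\lfloor\alpha_U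 N\rfloor$ unfriendly, $N_C=N-N_F-N_U$ contingent agents. Standing assumption: $\alpha_F<\mu$ and $\alpha_U<1-\mu$ (neither predetermined group can dominate), so the informed majority decision is $\mathbf{A}$ in $H$ and $\mathbf{R}$ in $L$. A sequence of instances $\{\mathcal{I}_N\}$: $\mathcal{I}_N$ has $N$ agents; all share $\mu$, prior, signal distributions and $\alpha$'s; utilities arbitrary. Strategy $\sigma=(\beta_l,\beta_h)$ with $\beta_s$ = probability of voting $\mathbf{A}$ on signal $s$. A profile is regular if friendly agents always vote $\mathbf{A}$ and unfriendly agents always vote $\mathbf{R}$. Fidelity: $A(\Sigma)=P_L\lambda^{\mathbf{R}}_L(\Sigma)+P_H\lambda^{\mathbf{A}}_H(\Sigma)$, where $\lambda^{\mathbf{X}}_w(\Sigma)$ is the ex-ante probability that $\mathbf{X}$ wins in state $w$. *)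

(* Defs.v *)
From HB Require Import structures.
From mathcomp Require Import all_boot all_order all_algebra.
From mathcomp Require Import boolp classical_sets reals topology normedtype sequences.
Set Implicit Arguments. Unset Strict Implicit. Unset Printing Implicit Defensive.
Import Order.TTheory GRing.Theory Num.Theory.
Local Open Scope ring_scope.

Inductive state := L | H.
Inductive outcome := OA | OR.   (* OA = alternative A, OR = alternative R *)

Definition utility := state -> outcome -> nat.

Definition friendly (v : utility) : bool :=
  [&& (v L OA < v H OA)%N, (v L OR < v L OA)%N & (v H OR < v L OR)%N].
Definition unfriendly (v : utility) : bool :=
  [&& (v H OR < v L OR)%N, (v H OA < v H OR)%N & (v L OA < v H OA)%N].
Definition contingent (v : utility) : bool :=
  (v H OR < v H OA)%N && (v L OA < v L OR)%N.

Definition admissible_utility (B : nat) (v : utility) : Prop :=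
  (forall w o, (v w o <= B)%N) /\
  (v L OA < v H OA)%N /\ (v H OR < v L OR)%N /\
  [|| friendly v, unfriendly v | contingent v].

Definition valid_instance {R : realType} (aF aU : R) (B N : nat)
    (v : 'I_N -> utility) : Prop :=
  (forall n, admissible_utility B (v n)) /\
  (#|[set n | friendly (v n)]|%:Z = Num.floor (aF * N%:R)) /\
  (#|[set n | unfriendly (v n)]|%:Z = Num.floor (aU * N%:R)).

(* strategy profile: sigma n = (beta_l, beta_h) of agent n *)
Definition profile {R : realType} (N : nat) (sigma : 'I_N -> R * R) : Prop :=
  forall n, 0 <= (sigma n).1 <= 1 /\ 0 <= (sigma n).2 <= 1.

Definition regular {R : realType} (N : nat) (v : 'I_N -> utility)
    (sigma : 'I_N -> R * R) : Prop :=
  forall n, (friendly (v n) -> sigma n = (1, 1)) /\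
            (unfriendly (v n) -> sigma n = (0, 0)).

(* Pr[S_n = h | W = w] *)
Definition phigh {R : realType} (phL phH : R) (w : state) : R :=
  match w with L => phL | H => phH end.

Definition pvoteA {R : realType} (phL phH : R) (N : nat)
    (sigma : 'I_N -> R * R) (w : state) (n : 'I_N) : R :=
  (1 - phigh phL phH w) * (sigma n).1 + phigh phL phH w * (sigma n).2.

Definition pset {R : realType} (phL phH : R) (N : nat)
    (sigma : 'I_N -> R * R) (w : state) (S : {set 'I_N}) : R :=
  \prod_(n in S) pvoteA phL phH sigma w n *
  \prod_(n in ~: S) (1 - pvoteA phL phH sigma w n).

Definition lambda {R : realType} (mu phL phH : R) (N : nat)
    (sigma : 'I_N -> R * R) (o : outcome) (w : state) : R :=
  match o with
  | OA => \sum_(S : {set 'I_N} | mu * N%:R <= #|S|%:R) pset phL phH sigma w S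
  | OR => \sum_(S : {set 'I_N} | #|S|%:R < mu * N%:R) pset phL phH sigma w S
  end.

Definition fidelity {R : realType} (mu PL PH phL phH : R) (N : nat)
    (sigma : 'I_N -> R * R) : R :=
  PL * lambda mu phL phH sigma OR L + PH * lambda mu phL phH sigma OA H.

(* Main.v *)
Require Import Defs.
From HB Require Import structures.
From mathcomp Require Import all_boot all_order all_algebra.
From mathcomp Require Import boolp classical_sets reals topology normedtype sequences.
From mathcomp Require Import ring lra zify.
Import Order.TTheory GRing.Theory Num.Theory numFieldNormedType.Exports.
Local Open Scope ring_scope.
Set Implicit Arguments. Unset Strict Implicit.

Lemma prod_expand (R : comRingType) (N : nat) (a b : 'I_N -> R) :
  \sum_(S : {set 'I_N}) \prod_i (if i \in S then a i else b i) = \prod_i (a i + b i).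
Proof.
transitivity (\prod_(i : 'I_N) \sum_(x : bool) (if x then a i else b i)).
  rewrite bigA_distr_bigA /=.
  rewrite (reindex (fun S : {set 'I_N} => [ffun i => i \in S])) /=.
    by apply: eq_bigr => S _; apply: eq_bigr => i _; rewrite ffunE.
  exists (fun f : {ffun 'I_N -> bool} => [set i | f i]) => [S _|f _].
    by apply/setP => i; rewrite inE ffunE.
  by apply/ffunP => i; rewrite ffunE inE.
by apply: eq_bigr => i _; rewrite big_bool /= addrC.
Qed.

Definition ps (R : ringType) (N : nat) (p : 'I_N -> R) (S : {set 'I_N}) : R :=
  \prod_(n in S) p n * \prod_(n in ~: S) (1 - p n).

Lemma psE (R : comRingType) (N : nat) (p : 'I_N -> R) S :
  ps p S = \prod_i (if i \in S then p i else 1 - p i).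
Proof.
rewrite /ps [RHS](bigID (fun i => i \in S)) /=; congr (_ * _).
  by apply: eq_bigr => i ->.
apply: eq_big => [i|i]; first by rewrite inE.
by rewrite inE => /negbTE ->.
Qed.

Lemma ps_sum1 (R : comRingType) (N : nat) (p : 'I_N -> R) :
  \sum_S ps p S = 1.
Proof.
under eq_bigr do rewrite psE.
by rewrite prod_expand big1 // => i _; rewrite addrC subrK.
Qed.

Lemma ps_ge0 (R : realDomainType) (N : nat) (p : 'I_N -> R) S :
  (forall i, 0 <= p i <= 1) -> 0 <= ps p S.
Proof.
move=> hp; rewrite psE; apply: prodr_ge0 => i _.
case: (i \in S); have /andP[h1 h2] := hp i; lra.
Qed.

Lemma ps_prod (R : comRingType) (N : nat) (p : 'I_N -> R) (g : 'I_N -> bool -> R) :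
  \sum_S ps p S * \prod_i g i (i \in S) =
  \prod_i (p i * g i true + (1 - p i) * g i false).
Proof.
rewrite -prod_expand; apply: eq_bigr => S _.
rewrite psE -big_split /=; apply: eq_bigr => i _.
by case: (i \in S).
Qed.

Lemma card_sum (R : ringType) (N : nat) (S : {set 'I_N}) :
  (#|S|%:R : R) = \sum_i ((i \in S)%:R).
Proof.
rewrite -[LHS]/(1 *+ #|S|) -sumr_const big_mkcond /=.
by apply: eq_bigr => i _; case: (i \in S).
Qed.

Lemma pair_mom (R : comRingType) (N : nat) (p : 'I_N -> R) (i j : 'I_N) :
  \sum_S ps p S * (((i \in S)%:R - p i) * ((j \in S)%:R - p j)) =
  if i == j then p i * (1 - p i) else 0.
Proof.
pose g k (b : bool) := (if k == i then b%:R - p i else 1) * (if k == j then b%:R - p j else 1).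
transitivity (\sum_S ps p S * \prod_k g k (k \in S)).
  apply: eq_bigr => S _; congr (_ * _); rewrite big_split /=.
  by rewrite -!big_mkcond !big_pred1_eq.
rewrite ps_prod (bigD1 i) //= /g eqxx.
case: eqP => [<-|/eqP nij].
  rewrite big1 ?mulr1 => [|k /negbTE ->]; last by rewrite !mulr1; ring.
  by rewrite /=; ring.
rewrite /=; set z := (X in X * _ = 0); have -> : z = 0 by rewrite /z; ring.
by rewrite mul0r.
Qed.

Lemma second_mom (R : comRingType) (N : nat) (p : 'I_N -> R) :
  \sum_S ps p S * (\sum_i ((i \in S)%:R - p i)) ^+ 2 = \sum_i p i * (1 - p i).
Proof.
transitivity (\sum_S \sum_i \sum_j ps p S * (((i \in S)%:R - p i) * ((j \in S)%:R - p j))).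
  apply: eq_bigr => S _.
  rewrite expr2 mulr_suml mulr_sumr; apply: eq_bigr => i _.
  by rewrite mulr_sumr mulr_sumr.
rewrite exchange_big /=; apply: eq_bigr => i _.
rewrite exchange_big /=.
under eq_bigr do rewrite pair_mom.
by rewrite -big_mkcond /= (big_pred1 i) // => j; rewrite eq_sym.
Qed.

Lemma cheb (R : realType) (N : nat) (p : 'I_N -> R) (bad : pred {set 'I_N}) (m g : R) :
  (forall i, 0 <= p i <= 1) -> m = \sum_i p i ->
  (forall S, bad S -> g ^+ 2 <= (#|S|%:R - m) ^+ 2) ->
  g ^+ 2 * \sum_(S | bad S) ps p S <= N%:R.
Proof.
move=> hp hm hb.
rewrite mulr_sumr.
apply: (@le_trans _ _ (\sum_(S | bad S) ps p S * (#|S|%:R - m) ^+ 2)).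
  apply: ler_sum => S hS; rewrite mulrC; apply: ler_wpM2l; first exact: ps_ge0.
  exact: hb.
apply: (@le_trans _ _ (\sum_S ps p S * (#|S|%:R - m) ^+ 2)).
  rewrite [X in _ <= X](bigID bad) /= lerDl; apply: sumr_ge0 => S _.
  by apply: mulr_ge0; [exact: ps_ge0 | exact: sqr_ge0].
have -> : \sum_S ps p S * (#|S|%:R - m) ^+ 2 = \sum_i p i * (1 - p i).
  rewrite -second_mom; apply: eq_bigr => S _.
  by rewrite card_sum hm -sumrB.
have -> : (N%:R : R) = \sum_(i < N) 1 by rewrite sumr_const card_ord.
apply: ler_sum => i _; have /andP[h1 h2] := hp i; nra.
Qed.

Lemma fr_unfr (v : utility) : friendly v -> unfriendly v = false.
Proof.
rewrite /friendly /unfriendly => /and3P [h1 h2 h3].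
apply/negbTE/negP => /and3P [a b c]; lia.
Qed.

Lemma sum_ind (R : ringType) N (P : pred 'I_N) :
  \sum_i ((P i)%:R : R) = #|[set i | P i]|%:R.
Proof. by rewrite card_sum; apply: eq_bigr => i _; rewrite inE. Qed.

Lemma sum_one (R : ringType) N : \sum_(i < N) (1 : R) = N%:R.
Proof. by rewrite sumr_const card_ord. Qed.

Lemma floor_bounds (R : realType) (x : R) (F : nat) :
  F%:Z = Num.floor x -> x - 1 < F%:R <= x.
Proof.
move=> hF; have := floor_itv x; rewrite -hF intrD /= => /andP[h1 h2].
have e : (F%:Z)%:~R = F%:R :> R by [].
rewrite e in h1 h2; apply/andP; split => //; lra.
Qed.

Lemma tail_bound (R : realType) (c N P e : R) : 0 < c -> 0 < e -> 0 <= P ->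
  2 / c + 8 / (c ^+ 2 * e) < N -> (c * N - 1) ^+ 2 * P <= N -> P <= e / 2.
Proof.
move=> hc he hP hN hb.
have c2 : 0 < c ^+ 2 * e by apply: mulr_gt0 => //; apply: exprn_gt0.
have u1 : 2 / c * c = 2 by rewrite mulfVK // gt_eqF.
have u2 : 8 / (c ^+ 2 * e) * (c ^+ 2 * e) = 8 by rewrite mulfVK // gt_eqF.
have hu1 : 0 <= 2 / c by apply: divr_ge0 => //; lra.
have hu2 : 0 <= 8 / (c ^+ 2 * e) by apply: divr_ge0 => //; lra.
set u := 2 / c in u1 hu1 hN. set w := 8 / (c ^+ 2 * e) in u2 hu2 hN.
have hcN : 2 < c * N by nra.
have hg : c * N / 2 <= c * N - 1 by lra.
have hN0 : 0 < N by nra.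
have h3 : (c * N / 2) ^+ 2 * P <= N.
  apply: le_trans hb; apply: ler_wpM2r => //.
  rewrite !expr2; apply: ler_pM => //; lra.
have h4 : c ^+ 2 * N * P <= 4 by rewrite !expr2 in h3 *; nra.
have h5 : 8 < c ^+ 2 * e * N by nra.
have h6 : c ^+ 2 * N * P * e <= 4 * e by nra.
rewrite expr2 in h4 h5 h6 c2; nra.
Qed.

Lemma lam_compl (R : realType) (N : nat) (p : 'I_N -> R) (x : R) :
  \sum_(S : {set 'I_N} | #|S|%:R < x) ps p S =
  1 - \sum_(S : {set 'I_N} | x <= #|S|%:R) ps p S.
Proof.
apply/eqP; rewrite eq_sym subr_eq addrC; apply/eqP.
rewrite -[LHS](ps_sum1 p) (bigID (fun S : {set 'I_N} => x <= #|S|%:R)) /=; congr (_ + _).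
by apply: eq_bigl => S; rewrite ltNge.
Qed.

Lemma conc_hi (R : realType) (N : nat) (p : 'I_N -> R) (x c : R) :
  (forall i, 0 <= p i <= 1) -> 0 <= c * N%:R - 1 ->
  x + (c * N%:R - 1) <= \sum_i p i ->
  (c * N%:R - 1) ^+ 2 * \sum_(S : {set 'I_N} | #|S|%:R < x) ps p S <= N%:R.
Proof.
move=> hp hg hm; apply: (cheb (m := \sum_i p i)) => // S /= hS.
rewrite !expr2; nra.
Qed.

Lemma conc_lo (R : realType) (N : nat) (p : 'I_N -> R) (x c : R) :
  (forall i, 0 <= p i <= 1) -> 0 <= c * N%:R - 1 ->
  \sum_i p i + (c * N%:R - 1) <= x ->
  (c * N%:R - 1) ^+ 2 * \sum_(S : {set 'I_N} | x <= #|S|%:R) ps p S <= N%:R.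
Proof.
move=> hp hg hm; apply: (cheb (m := \sum_i p i)) => // S /= hS.
rewrite !expr2; nra.
Qed.

Unset Implicit Arguments. Set Strict Implicit.
Local Open Scope classical_set_scope.

Theorem theorem3 (R : realType) (mu PL PH phL phH aF aU aC : R) (B : nat)
  (hmu : 0 < mu < 1)
  (hPL : 0 < PL) (hPH : 0 < PH) (hP : PL + PH = 1)
  (hphL : 0 <= phL <= 1) (hphH : 0 <= phH <= 1) (hsig : phL < phH)
  (haF : 0 <= aF) (haU : 0 <= aU) (haC : 0 <= aC) (ha : aF + aU + aC = 1)
  (hFmu : aF < mu) (hUmu : aU < 1 - mu)
  (v : forall N : nat, 'I_N -> utility)
  (hv : forall N : nat, valid_instance aF aU B (v N)) :
  exists sigma : forall N : nat, 'I_N -> R * R,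
    (forall N : nat, profile (sigma N) /\ regular (v N) (sigma N)) /\
    (fun N : nat => fidelity mu PL PH phL phH (sigma N)) @ \oo --> (1 : R).
Proof.
move: hmu hphL hphH => /andP[hmu0 hmu1] /andP[hphL0 hphL1] /andP[hphH0 hphH1].
set aC' := 1 - aF - aU.
have haCp : mu - aF < aC' by rewrite /aC'; lra.
have haC0 : 0 < aC' by lra.
set t := (mu - aF) / aC'.
have ht : t * aC' = mu - aF by rewrite /t mulfVK // gt_eqF.
have ht0 : 0 < t by rewrite /t divr_gt0 //; lra.
have ht1 : t < 1 by nra.
set mm := (phL + phH) / 2.
have hmm : mm * 2 = phL + phH by rewrite /mm mulfVK // pnatr_eq0.
set d := t * (1 - t).
have hd0 : 0 < d by rewrite /d mulr_gt0 //; lra.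
have hd1 : d <= t by rewrite /d; nra.
have hd2 : d <= 1 - t by rewrite /d; nra.
set bl := t - mm * d.
set bh := t + (1 - mm) * d.
have hbl : 0 <= bl <= 1 by apply/andP; split; rewrite /bl; nra.
have hbh : 0 <= bh <= 1 by apply/andP; split; rewrite /bh; nra.
move: hbl hbh => /andP[hbl0 hbl1] /andP[hbh0 hbh1].
pose pw (w : state) := (1 - phigh phL phH w) * bl + phigh phL phH w * bh.
have hpw w : pw w = t + (phigh phL phH w - mm) * d by rewrite /pw /bl /bh; ring.
have hph w : 0 <= phigh phL phH w <= 1 by case: w => /=; apply/andP; split.
have hpw01 w : 0 <= pw w <= 1.
  have /andP[h0 h1] := hph w; rewrite /pw; apply/andP; split; nra.
pose sigma N (n : 'I_N) : R * R :=
  if friendly (v N n) then (1, 1) else if unfriendly (v N n) then (0, 0) else (bl, bh).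
exists sigma; split.
  move=> N; split => n; rewrite /sigma.
    case: ifP => _ /=; first by split; apply/andP; split; lra.
    by case: ifP => _ /=; split; apply/andP; split; lra.
  split => hf; first by rewrite hf.
  by case fr: (friendly (v N n)); [rewrite fr_unfr in hf | rewrite hf].
have hpv N w n : pvoteA phL phH (sigma N) w n =
    (friendly (v N n))%:R + (1 - (friendly (v N n))%:R - (unfriendly (v N n))%:R) * pw w.
  rewrite /pvoteA /sigma /pw; case fr: (friendly (v N n)).
    by rewrite (fr_unfr fr) /=; ring.
  by case: (unfriendly _) => /=; ring.
have hpv01 N w n : 0 <= pvoteA phL phH (sigma N) w n <= 1.
  have /andP[h0 h1] := hpw01 w.
  rewrite hpv; case fr: (friendly (v N n)); first by rewrite (fr_unfr fr) /=; lra.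
  by case: (unfriendly _) => /=; apply/andP; split; lra.
pose Fr N := (#|[set n | friendly (v N n)]%SET|%:R : R).
pose Un N := (#|[set n | unfriendly (v N n)]%SET|%:R : R).
have hm N w : \sum_n pvoteA phL phH (sigma N) w n = Fr N + (N%:R - Fr N - Un N) * pw w.
  under eq_bigr do rewrite hpv.
  rewrite big_split /= -mulr_suml !sumrB (sum_ind _ (fun i => friendly (v N i))) (sum_ind _ (fun i => unfriendly (v N i))) sum_one.
  by [].
have hFU N : aF * N%:R - 1 < Fr N <= aF * N%:R /\ aU * N%:R - 1 < Un N <= aU * N%:R.
  have := hv N; rewrite /valid_instance => -[_ [hF hU]].
  by split; apply: floor_bounds.
set cH := aF + aC' * pw H - mu.
set cL := mu - aF - aC' * pw L.
have hcH : 0 < cH.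
  have -> : cH = aC' * ((phH - mm) * d) by rewrite /cH hpw /=; nra.
  by apply: mulr_gt0 => //; apply: mulr_gt0 => //; lra.
have hcL : 0 < cL.
  have -> : cL = aC' * ((mm - phL) * d) by rewrite /cL hpw /=; nra.
  by apply: mulr_gt0 => //; apply: mulr_gt0 => //; lra.
have hbadH N : 0 <= cH * N%:R - 1 ->
    (cH * N%:R - 1) ^+ 2 * \sum_(S : {set 'I_N} | #|S|%:R < mu * N%:R)
       ps (pvoteA phL phH (sigma N) H) S <= N%:R.
  move=> hg; apply: conc_hi => //; rewrite hm.
  have [/andP[f1 f2] /andP[u1 u2]] := hFU N.
  have /andP[p0 p1] := hpw01 H.
  have k1 : 0 <= (Fr N - aF * N%:R + 1) * (1 - pw H) by apply: mulr_ge0; lra.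
  have k2 : 0 <= (aU * N%:R - Un N) * pw H by apply: mulr_ge0; lra.
  rewrite /cH /aC'; lra.
have hbadL N : 0 <= cL * N%:R - 1 ->
    (cL * N%:R - 1) ^+ 2 * \sum_(S : {set 'I_N} | mu * N%:R <= #|S|%:R)
       ps (pvoteA phL phH (sigma N) L) S <= N%:R.
  move=> hg; apply: conc_lo => //; rewrite hm.
  have [/andP[f1 f2] /andP[u1 u2]] := hFU N.
  have /andP[p0 p1] := hpw01 L.
  have k1 : 0 <= (aF * N%:R - Fr N) * (1 - pw L) by apply: mulr_ge0; lra.
  have k2 : 0 <= (Un N - aU * N%:R + 1) * pw L by apply: mulr_ge0; lra.
  rewrite /cL /aC'; lra.
clear - hcH hcL hbadH hbadL hpv01 hP hPL hPH.
apply/cvgrPdist_le => e he.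
set KH := 2 / cH + 8 / (cH ^+ 2 * e).
set KL := 2 / cL + 8 / (cL ^+ 2 * e).
have hKH : 0 <= KH.
  rewrite /KH; apply: addr_ge0; apply: divr_ge0; rewrite ?mulr_ge0 ?exprn_ge0; lra.
have hKL : 0 <= KL.
  rewrite /KL; apply: addr_ge0; apply: divr_ge0; rewrite ?mulr_ge0 ?exprn_ge0; lra.
exists (Num.trunc (KH + KL)).+1 => // N /= hN.
have hNK : KH + KL < N%:R.
  apply: lt_le_trans (truncnS_gt _) _; by rewrite ler_nat.
have hNH : KH < N%:R by lra.
have hNL : KL < N%:R by lra.
have hN0 : 0 < N%:R :> R by lra.
set QH := \sum_(S : {set 'I_N} | #|S|%:R < mu * N%:R) ps (pvoteA phL phH (sigma N) H) S.
set QL := \sum_(S : {set 'I_N} | mu * N%:R <= #|S|%:R) ps (pvoteA phL phH (sigma N) L) S.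
have hQH0 : 0 <= QH by apply: sumr_ge0 => S _; apply: ps_ge0 => i; exact: hpv01.
have hQL0 : 0 <= QL by apply: sumr_ge0 => S _; apply: ps_ge0 => i; exact: hpv01.
have hu1 : 2 / cH * cH = 2 by rewrite mulfVK // gt_eqF.
have hu2 : 2 / cL * cL = 2 by rewrite mulfVK // gt_eqF.
have hw1 : 0 <= 8 / (cH ^+ 2 * e) by apply: divr_ge0; rewrite ?mulr_ge0 ?exprn_ge0; lra.
have hw2 : 0 <= 8 / (cL ^+ 2 * e) by apply: divr_ge0; rewrite ?mulr_ge0 ?exprn_ge0; lra.
have hgH : 0 <= cH * N%:R - 1.
  have : 2 / cH < N%:R by rewrite /KH in hNH; lra.
  move: (2 / cH) hu1 => u hu hlt.
  have k : 0 < cH * (N%:R - u) by apply: mulr_gt0; lra.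
  lra.
have hgL : 0 <= cL * N%:R - 1.
  have : 2 / cL < N%:R by rewrite /KL in hNL; lra.
  move: (2 / cL) hu2 => u hu hlt.
  have k : 0 < cL * (N%:R - u) by apply: mulr_gt0; lra.
  lra.
have bH : QH <= e / 2 by apply: (tail_bound hcH he hQH0 hNH); apply: hbadH.
have bL : QL <= e / 2 by apply: (tail_bound hcL he hQL0 hNL); apply: hbadL.
rewrite /fidelity /lambda.
rewrite (lam_compl (pvoteA phL phH (sigma N) L)).
have -> : \sum_(S : {set 'I_N} | mu * N%:R <= #|S|%:R) pset phL phH (sigma N) H S = 1 - QH.
  by rewrite /QH lam_compl opprB addrC subrK.
rewrite -/QL.
have -> : 1 - (PL * (1 - QL) + PH * (1 - QH)) = PL * QL + PH * QH.
  by rewrite -{1}hP; ring.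
rewrite ger0_norm; last by apply: addr_ge0; apply: mulr_ge0; lra.
have k1 : 0 <= (1 - PL) * QL by apply: mulr_ge0; lra.
have k2 : 0 <= (1 - PH) * QH by apply: mulr_ge0; lra.
lra.
Qed.
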